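(* A function $\gamma:\mathbb{R}^d\times\mathcal{W}\to\mathbb{R}$ is $\mathcal{F}$-local covariogram admissible if and only if it is $\mathcal{M}$-local covariogram admissible.
   Context: $\mathcal{M}$: Lebesgue measurable subsets of $\mathbb{R}^d$; $\mathcal{F}$: closed subsets of $\mathbb{R}^d$. $\mathcal{W}$: bounded open $W$ with $\mathcal{L}^d(\partial W)=0$; $\delta_{y;W}(A)=\mathcal{L}^d(A\cap(y+A)\cap W)$. For $\mathcal{C}\in\{\mathcal{M},\mathcal{F}\}$, $\gamma$ is $\mathcal{C}$-local covariogram admissible if for all $q\ge1$, $a\in\mathbb{R}^q$, $y_i\in\mathbb{R}^d$, $W_i\in\mathcal{W}$, $c\in\mathbb{R}$: $[c+\sum_ia_i\delta_{y_i;W_i}(A)\ge0\ \forall A\in\mathcal{C}]\Rightarrow c+\sum_ia_i\gamma(y_i;W_i)\ge0$. *)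

(* Defs.v *)
From HB Require Import structures.
From mathcomp Require Import all_boot all_order all_algebra.
From mathcomp Require Import all_classical all_reals all_analysis.
Set Implicit Arguments. Unset Strict Implicit. Unset Printing Implicit Defensive.
Import Order.TTheory GRing.Theory Num.Theory.
Import numFieldNormedType.Exports.
Local Open Scope classical_set_scope.
Local Open Scope ring_scope.

Section Defs.
Variables (R : realType) (d : nat).
Local Notation V := 'rV[R]_d.

Definition box (a b : V) : set V :=
  [set x | forall i : 'I_d, a ord0 i <= x ord0 i < b ord0 i].

Definition box_vol (a b : V) : R :=
  \prod_(i < d) Num.max 0 (b ord0 i - a ord0 i).

Definition leb_outer (A : set V) : \bar R :=
  ereal_inf [set s | exists a b : nat -> V,
     A `<=` \bigcup_k box (a k) (b k) /\
     s = (\sum_(0 <= k <oo) (box_vol (a k) (b k))%:E)%E].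

Definition leb_measurable (A : set V) : Prop := leb_outer.-caratheodory A.

Definition closed_set (A : set V) : Prop := closed A.

Definition translate (y : V) (A : set V) : set V := (fun x => y + x) @` A.

Definition window (W : set V) : Prop :=
  open W /\ bounded_set W /\ leb_outer (closure W `\` interior W) = 0%E.

(* delta_{y;W}(A) = L^d(A /\ (y + A) /\ W) (finite since W is bounded) *)
Definition delta (y : V) (W A : set V) : R :=
  fine (leb_outer (A `&` translate y A `&` W)).

(* C-local covariogram admissibility of gamma : R^d x W -> R
   (gamma is given as a total function; only its values on windows matter) *)
Definition lc_admissible (C : set V -> Prop) (gamma : V -> set V -> R) : Prop :=
  forall (q : nat) (a : 'I_q -> R) (y : 'I_q -> V) (W : 'I_q -> set V) (c : R),
    (0 < q)%N ->
    (forall i, window (W i)) ->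
    (forall A, C A -> 0 <= c + \sum_(i < q) a i * delta (y i) (W i) A) ->
    0 <= c + \sum_(i < q) a i * gamma (y i) (W i).

End Defs.

(* Main.v *)
Require Import Defs.
From HB Require Import structures.
From mathcomp Require Import all_boot all_order all_algebra.
From mathcomp Require Import all_classical all_reals all_analysis.
From mathcomp Require Import lra ring.
From Stdlib Require Import Classical_Prop.
Set Implicit Arguments. Unset Strict Implicit. Unset Printing Implicit Defensive.
Import Order.TTheory GRing.Theory Num.Theory.
Import numFieldNormedType.Exports.
Local Open Scope classical_set_scope.
Local Open Scope ring_scope.
Local Open Scope ereal_scope.

Section P.
Variables (R : realType) (d : nat).
Local Notation V := 'rV[R]_d.
Local Notation mu := (@leb_outer R d).

Lemma box_vol_ge0 (a b : V) : (0 <= box_vol a b)%R.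
Proof. by apply: prodr_ge0 => i _; rewrite le_max lexx. Qed.

Lemma mu_ge0 (A : set V) : (0 <= mu A)%E.
Proof.
apply: le_ereal_inf_tmp => s [a [b [_ ->]]].
by apply: nneseries_ge0 => k _; rewrite lee_fin box_vol_ge0.
Qed.

Lemma le_mu (A B : set V) : A `<=` B -> (mu A <= mu B)%E.
Proof.
move=> AB; apply: ereal_inf_le_tmp => s [a [b [Bc ->]]].
by exists a, b; split => //; exact: subset_trans Bc.
Qed.

Lemma mu_cover (A : set V) (a b : nat -> V) :
  A `<=` \bigcup_k box (a k) (b k) ->
  (mu A <= \sum_(0 <= k <oo) (box_vol (a k) (b k))%:E)%E.
Proof. by move=> Ac; apply: ereal_inf_lbound; exists a, b. Qed.

Variable hd : (0 < d)%N.

Lemma box_vol_deg (a b : V) i : (b ord0 i <= a ord0 i)%R -> box_vol a b = 0%R.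
Proof.
move=> ba; rewrite /box_vol (bigD1 i) //=.
have -> : (Num.max 0 (b ord0 i - a ord0 i) = 0)%R.
  by apply/max_idPl; rewrite subr_le0.
by rewrite mul0r.
Qed.

Lemma mu0 : mu set0 = 0%E.
Proof.
apply/eqP; rewrite eq_le mu_ge0 andbT.
have := @mu_cover set0 (fun=> 0%R) (fun=> 0%R) (sub0set _).
rewrite eseries0 // => k _ _; apply/eqP; rewrite eqe.
by rewrite (box_vol_deg (i := Ordinal hd)).
Qed.

Lemma mu_sigma_sub : sigma_subadditive mu.
Proof.
move=> A; have [[i ioo]|] := pselect (exists i, mu (A i) = +oo%E).
  rewrite (eseries_pinfty _ _ ioo) ?leey// => n _.
  by rewrite -ltNye (lt_le_trans _ (mu_ge0 _)).
rewrite -forallNE => Aoo.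
suff add2e (e : {posnum R}) :
    (mu (\bigcup_n A n) <= \sum_(i <oo) mu (A i) + e%:num%:E)%E.
  by apply/lee_addgt0Pr => _/posnumP[].
rewrite (le_trans _ (epsilon_trick _ _ _))//; last first.
  by move=> n; exact: mu_ge0.
pose P n (ab : (nat -> V) * (nat -> V)) :=
  A n `<=` \bigcup_k box (ab.1 k) (ab.2 k) /\
  (\sum_(k <oo) (box_vol (ab.1 k) (ab.2 k))%:E <=
     mu (A n) + (e%:num / (2 ^ n.+1)%:R)%:E)%E.
have [G PG] : {G : nat -> ((nat -> V) * (nat -> V)) & forall n, P n (G n)}.
  apply: (@choice _ _ P) => n; rewrite /P /leb_outer.
  set S := (X in ereal_inf X); move infS : (ereal_inf S) => iS.
  case: iS infS => [r Sr|Soo|Soo].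
  - have en1 : (0 < e%:num / (2 ^ n.+1)%:R)%R by [].
    have /(lb_ereal_inf_adherent en1) : ereal_inf S \is a fin_num by rewrite Sr.
    move=> [x [a [b [AnB muBx]]] xS].
    by exists (a, b); split => //; rewrite -muBx -Sr; exact/ltW.
  - by have := Aoo n; rewrite /leb_outer Soo.
  - suff : lbound S 0%E by move/le_ereal_inf_tmp; rewrite Soo.
    move=> /= _ [a [b [_ ->]]].
    by apply: nneseries_ge0 => k _; rewrite lee_fin box_vol_ge0.
pose g (p : nat * nat) := (box_vol ((G p.1).1 p.2) ((G p.1).2 p.2))%:E.
have g_ge0 x : (0 <= g x)%E by rewrite lee_fin box_vol_ge0.
apply: (@le_trans _ _ (\esum_(i in setT) g i)).
  have /card_esym/ppcard_eqP[f] := card_nat2.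
  apply: le_trans (mu_cover (a := fun k => (G (f k).1).1 (f k).2)
                            (b := fun k => (G (f k).1).2 (f k).2) _) _.
    move=> t [i _ /(PG i).1 [j _ ?]]; exists (f^-1%FUN (i, j)) => //=.
    by rewrite invK ?inE.
  rewrite -(esum_pred_image g _ xpredT) ?[fun=> _]set_true//.
  by rewrite image_eq.
rewrite (_ : esum _ _ = \sum_(i <oo) \sum_(j <oo ) g (i, j)); last first.
  pose J : nat -> set (nat * nat) := fun i => [set (i, j) | j in setT].
  rewrite (_ : setT = \bigcup_k J k); last first.
    by rewrite predeqE => -[a b]; split => // _; exists a => //; exists b.
  rewrite esum_bigcupT /=; last 2 first.
    - apply/trivIsetP => i j _ _ ij.
      rewrite predeqE => -[n m] /=; split => //= -[] [_] _ [<-{n} _].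
      by move=> [m' _] [] /esym/eqP; rewrite (negbTE ij).
    - by move=> /= [n m].
  rewrite -(image_id [set: nat]) -fun_true esum_pred_image//; last first.
    by move=> n _; exact: esum_ge0.
  apply: eq_eseriesr => /= j _.
  rewrite -(esum_pred_image g (pair j) predT)//=; last first.
    by move=> ? ? _ _; exact: (@can_inj _ _ _ snd).
  by congr esum; rewrite predeqE => -[a b]; split; move=> [i _ <-]; exists i.
apply: lee_lim.
- apply: is_cvg_nneseries => n *.
  by apply: nneseries_ge0 => m *; exact: (g_ge0 (n, m)).
- by apply: is_cvg_nneseries => n *; apply: adde_ge0 => //; exact: mu_ge0.
- by near=> n; apply: lee_sum => i _; exact: (PG i).2.
Unshelve. all: by end_near. Qed.


Definition lebO : {outer_measure set V -> \bar R} :=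
  HB.pack mu (isOuterMeasure.Build R V mu mu0 mu_ge0 le_mu mu_sigma_sub).

Lemma lebOE : (lebO : set V -> \bar R) = mu.
Proof. by []. Qed.

Definition setc (v : V) (i : 'I_d) (r : R) : V :=
  \row_j (if j == i then r else v ord0 j).

Lemma setcE v i r j : setc v i r ord0 j = if j == i then r else v ord0 j.
Proof. by rewrite /setc mxE. Qed.

Lemma max_split (a b t : R) :
  (Num.max 0 (Num.min b t - a) + Num.max 0 (b - Num.max a t) =
   Num.max 0 (b - a))%R.
Proof.
case: (leP b t) => bt; case: (leP a t) => at_;
  case: (leP 0%R (b - a)%R) => ?; case: (leP 0%R (b - t)%R) => ?;
  case: (leP 0%R (t - a)%R) => ?; lra.
Qed.

Lemma vol_D1 (a b : V) i : box_vol a b =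
  (Num.max 0 (b ord0 i - a ord0 i) *
   \prod_(j < d | j != i) Num.max 0 (b ord0 j - a ord0 j))%R.
Proof. by rewrite /box_vol (bigD1 i). Qed.

Lemma box_vol_split (a b : V) i t :
  (box_vol a (setc b i (Num.min (b ord0 i) t)) +
   box_vol (setc a i (Num.max (a ord0 i) t)) b = box_vol a b)%R.
Proof.
rewrite !(vol_D1 _ _ i) !setcE eqxx.
have E1 : (\prod_(j < d | j != i) Num.max 0 (setc b i (Num.min (b ord0 i) t) ord0 j - a ord0 j)
   = \prod_(j < d | j != i) Num.max 0 (b ord0 j - a ord0 j))%R.
  by apply: eq_bigr => j ji; rewrite setcE (negbTE ji).
have E2 : (\prod_(j < d | j != i) Num.max 0 (b ord0 j - setc a i (Num.max (a ord0 i) t) ord0 j)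
   = \prod_(j < d | j != i) Num.max 0 (b ord0 j - a ord0 j))%R.
  by apply: eq_bigr => j ji; rewrite setcE (negbTE ji).
by rewrite E1 E2 -mulrDl max_split.
Qed.

Definition hs (i : 'I_d) (t : R) : set V := [set x | (x ord0 i < t)%R].

Lemma hs_meas i t : leb_measurable (hs i t).
Proof.
apply: (@le_caratheodory_measurable _ _ lebO) => X; rewrite lebOE.
apply: le_ereal_inf_tmp => s [a [b [Xc ->]]].
set b1 := fun k => setc (b k) i (Num.min (b k ord0 i) t).
set a2 := fun k => setc (a k) i (Num.max (a k ord0 i) t).
apply: le_trans (leeD (@mu_cover _ a b1 _) (@mu_cover _ a2 b _)) _.
- move=> x [/Xc [k _ xk] xt]; exists k => // j; rewrite /b1 setcE.
  case: eqP => [->|_]; last exact: xk.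
  by have := xk i => /andP[-> _]; rewrite lt_min (andP (xk i)).2.
- move=> x [/Xc [k _ xk] /negP xt]; exists k => // j; rewrite /a2 setcE.
  case: eqP => [->|_]; last exact: xk.
  have := xk i => /andP[h1 h2]; rewrite h2 andbT ge_max h1 /=.
  by rewrite leNgt.
rewrite -nneseriesD; last 2 first.
- by move=> k _ _; rewrite lee_fin box_vol_ge0.
- by move=> k _ _; rewrite lee_fin box_vol_ge0.
by rewrite le_eqVlt; apply/orP; left; apply/eqP; apply: eq_eseriesr => k _; rewrite -EFinD box_vol_split.
Qed.


Local Notation M := (@leb_measurable R d).

Lemma measC A : M A -> M (~` A).
Proof. exact: (@caratheodory_measurable_setC _ _ lebO). Qed.

Lemma measI A B : M A -> M B -> M (A `&` B).
Proof. exact: (@caratheodory_measurable_setI _ _ lebO). Qed.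

Lemma meas_bigcup (F : nat -> set V) : (forall n, M (F n)) -> M (\bigcup_n F n).
Proof. exact: (@caratheodory_measurable_bigcup _ _ lebO). Qed.

Lemma meas0 : M set0.
Proof. exact: (@caratheodory_measurable_set0 _ _ lebO). Qed.

Lemma measT : M setT.
Proof. by rewrite -setC0; apply: measC; exact: meas0. Qed.

Definition boxs (a b : V) (s : seq 'I_d) : set V :=
  fun x => forall i, i \in s -> (a ord0 i <= x ord0 i < b ord0 i)%R.

Lemma meas_boxs (a b : V) (s : seq 'I_d) : M (boxs a b s).
Proof.
elim: s => [|i s IH].
  rewrite (_ : boxs _ _ _ = setT); first exact: measT.
  by apply/seteqP; split => x //= _ i.
rewrite (_ : boxs _ _ _ = (~` hs i (a ord0 i) `&` hs i (b ord0 i)) `&` boxs a b s).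
  by apply: measI => //; apply: measI => //; [apply: measC|]; exact: hs_meas.
apply/seteqP; split => x /=.
  move=> h; have /andP[h1 h2] := h i (mem_head _ _).
  split; [split|]; rewrite /hs /=; [by apply/negP; rewrite -leNgt| by []|].
  by move=> j js; apply: h; rewrite in_cons js orbT.
move=> [[/negP h1 h2] h3] j; rewrite in_cons => /orP[/eqP ->|js]; last exact: h3.
by rewrite leNgt h1; exact: h2.
Qed.

Lemma meas_box (a b : V) : M (box a b).
Proof.
rewrite (_ : box a b = boxs a b (enum 'I_d)); first exact: meas_boxs.
by apply/seteqP; split => x /= h i //; apply: h; rewrite mem_enum.
Qed.

Definition rbox (p : ('rV[rat]_d * 'rV[rat]_d)%type) : set V :=
  box (map_mx ratr p.1) (map_mx ratr p.2).

Lemma meas_open (U : set V) : open U -> M U.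
Proof.
move=> oU.
pose B n := match (unpickle n : option ('rV[rat]_d * 'rV[rat]_d)%type) with
  | Some p => if `[< rbox p `<=` U >] then rbox p else set0
  | None => set0 end.
rewrite (_ : U = \bigcup_n B n).
  apply: meas_bigcup => n; rewrite /B.
  case: unpickle => [p|]; last exact: meas0.
  by case: ifP => _; [exact: meas_box|exact: meas0].
apply/seteqP; split => x; last first.
  move=> [n _]; rewrite /B; case: unpickle => [p|] //.
  by case: ifPn => // /asboolP; apply.
move=> Ux.
have := oU x Ux; rewrite /= nbhs_ballP => -[e e0 exU].
have g1 i : exists q : rat, ratr q \in `]x ord0 i - e, x ord0 i[%R.
  by apply: rat_in_itvoo; rewrite ltrBlDr ltrDl.
have [f1 hf1] := boolp.choice g1.
have g2 i : exists q : rat, ratr q \in `]x ord0 i, x ord0 i + e[%R.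
  by apply: rat_in_itvoo; rewrite ltrDl.
have [f2 hf2] := boolp.choice g2.
pose p := ((\row_i f1 i), (\row_i f2 i)).
exists (pickle p) => //; rewrite /B pickleK.
have xp : rbox p x.
  move=> i; rewrite /= !mxE.
  have := hf1 i; have := hf2 i; rewrite !in_itv /= => /andP[h1 _] /andP[_ h2].
  by rewrite h1 ltW.
case: ifPn => //; move/asboolP; apply => y yp; apply: exU.
split => // i j; rewrite (ord1 i).
have := yp j; rewrite /= !mxE => /andP[h1 h2].
have := hf1 j; have := hf2 j; rewrite !in_itv /= => /andP[h3 h4] /andP[h5 h6].
rewrite /ball /= ltr_norml; apply/andP; split; lra.
Qed.

Lemma meas_closed (A : set V) : closed A -> M A.
Proof.
by move=> cA; rewrite -(setCK A); apply: measC; apply: meas_open; exact: closed_openC.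
Qed.


Lemma ball_coord (x y : V) r i : ball x r y -> (`|x ord0 i - y ord0 i| < r)%R.
Proof. by case=> _ /(_ ord0 i). Qed.

Lemma open_gt i t : open [set x : V | (t < x ord0 i)%R].
Proof.
move=> x /= xt; rewrite nbhs_ballP; exists (x ord0 i - t)%R => /=.
  by rewrite subr_gt0.
move=> y /(ball_coord i); rewrite ltr_norml => /andP[_ h]; rewrite /=; lra.
Qed.

Lemma open_lt i t : open [set x : V | (x ord0 i < t)%R].
Proof.
move=> x /= xt; rewrite nbhs_ballP; exists (t - x ord0 i)%R => /=.
  by rewrite subr_gt0.
move=> y /(ball_coord i); rewrite ltr_norml => /andP[h _]; rewrite /=; lra.
Qed.

Definition obox (a b : V) : set V :=
  [set x | forall i, (a ord0 i < x ord0 i < b ord0 i)%R].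

Lemma open_obox (a b : V) : open (obox a b).
Proof.
suff H : forall s : seq 'I_d,
  open [set x : V | forall i, i \in s -> (a ord0 i < x ord0 i < b ord0 i)%R].
  rewrite (_ : obox a b = [set x : V | forall i, i \in enum 'I_d ->
     (a ord0 i < x ord0 i < b ord0 i)%R]); first exact: H.
  by apply/seteqP; split => x /= h i //; apply: h; rewrite mem_enum.
elim => [|i s IH].
  rewrite (_ : [set x | _] = setT); first exact: openT.
  by apply/seteqP; split => x //= _ i.
rewrite (_ : [set x | _] = ([set x : V | (a ord0 i < x ord0 i)%R] `&`
   [set x : V | (x ord0 i < b ord0 i)%R]) `&`
   [set x : V | forall j, j \in s -> (a ord0 j < x ord0 j < b ord0 j)%R]).
  by apply: openI => //; apply: openI; [exact: open_gt|exact: open_lt].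
apply/seteqP; split => x /=.
  move=> h; have /andP[h1 h2] := h i (mem_head _ _).
  by split; [split|] => // j js; apply: h; rewrite in_cons js orbT.
move=> [[h1 h2] h3] j; rewrite in_cons => /orP[/eqP ->|js]; last exact: h3.
by rewrite h1 h2.
Qed.

Lemma mu_translate (y : V) (X : set V) : (mu (translate y X) <= mu X)%E.
Proof.
apply: ereal_inf_le_tmp => s [a [b [Xc ->]]].
exists (fun k => y + a k)%R, (fun k => y + b k)%R; split.
  move=> _ [x /Xc [k _ xk] <-]; exists k => // i.
  by rewrite !mxE lerD2l ltrD2l; exact: xk.
apply: eq_eseriesr => k _; congr (_%:E); apply: eq_bigr => i _.
by rewrite !mxE; congr (Num.max _ _); ring.
Qed.

Lemma mu_box_le (a b : V) : (mu (box a b) <= (box_vol a b)%:E)%E.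
Proof.
apply: le_trans (@mu_cover _ (fun=> a) (fun k => if k == 0%N then b else a) _) _.
  by move=> x xb; exists 0%N.
rewrite (@nneseriesD1 _ _ 0%N) //=; last by move=> k _; rewrite lee_fin box_vol_ge0.
rewrite eseries0 ?adde0 // => k _ k0.
by rewrite (negbTE k0) (box_vol_deg (i := Ordinal hd)).
Qed.


Lemma pow_le' (t : R) n : (0 <= t)%R -> (t <= 1)%R ->
  ((1 + t) ^+ n <= 1 + t * (2 ^+ n - 1))%R.
Proof.
move=> t0 t1; elim: n => [|n IH]; first by rewrite !expr0 subrr mulr0 addr0.
rewrite !exprS.
have P1 : (1 <= (2:R) ^+ n)%R by apply: exprn_ege1; lra.
have X0 : (0 <= (1 + t) ^+ n)%R by apply: exprn_ge0; lra.
move: IH P1 X0; set X := ((1 + t) ^+ n)%R; set P := ((2:R) ^+ n)%R => IH P1 X0.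
apply: (@le_trans _ _ ((1 + t) * (1 + t * (P - 1)))%R).
  by apply: ler_wpM2l => //; lra.
have : (0 <= t * (1 - t) * (P - 1))%R.
  by apply: mulr_ge0; [apply: mulr_ge0|]; lra.
nra.
Qed.

Lemma pow_le (t : R) n : (0 <= t)%R -> (t <= 1)%R ->
  ((1 + t) ^+ n <= 1 + t * 2 ^+ n)%R.
Proof.
move=> t0 t1; apply: le_trans (pow_le' n t0 t1) _.
have : (0 <= t)%R := t0. nra.
Qed.

Lemma vol_scale (a b : V) (t : R) : (0 <= t)%R ->
  box_vol (a - t *: (b - a)) b = ((1 + t) ^+ d * box_vol a b)%R.
Proof.
move=> t0.
have -> : ((1 + t) ^+ d = \prod_(i < d) (1 + t))%R by rewrite prodr_const card_ord.
rewrite /box_vol -big_split /=; apply: eq_bigr => i _.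
rewrite !mxE maxr_pMr ?mulr0; last lra.
by congr (Num.max _ _); ring.
Qed.

Lemma outer_reg (X : set V) (eta : R) : (0 < eta)%R -> mu X \is a fin_num ->
  exists U, [/\ open U, X `<=` U & (mu U <= mu X + eta%:E)%E].
Proof.
move=> e0 Xfin.
have e2 : (0 < eta / 2)%R by lra.
have [_ [a [b [Xc ->]]] slt] := lb_ereal_inf_adherent e2 Xfin.
rewrite -/(leb_outer X) in slt.
set m := fine (mu X).
have muXE : mu X = m%:E by rewrite fineK.
have m0 : (0 <= m)%R by rewrite -lee_fin -muXE mu_ge0.
set c := (m + eta / 2)%R.
have c0 : (0 < c)%R by rewrite /c; lra.
set S := (\sum_(0 <= k <oo) (box_vol (a k) (b k))%:E)%E in slt *.
have S0 : (0 <= S)%E by apply: nneseries_ge0 => k _; rewrite lee_fin box_vol_ge0.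
have SE : S = (fine S)%:E.
  rewrite fineK // ge0_fin_numE //; apply: lt_le_trans slt _.
  by rewrite muXE leey.
have fS0 : (0 <= fine S)%R by rewrite -lee_fin -SE.
have fSc : (fine S <= c)%R.
  by rewrite -lee_fin -SE; apply: ltW; rewrite /c EFinD -muXE.
set t := (Num.min 1 (eta / (2 * 2 ^+ d * c)))%R.
have P0 : (0 < (2:R) ^+ d)%R by apply: exprn_gt0; lra.
have t0 : (0 < t)%R.
  rewrite lt_min ltr01 /=; apply: divr_gt0 => //.
  by apply: mulr_gt0 => //; apply: mulr_gt0 => //; lra.
have t1 : (t <= 1)%R by rewrite ge_min lexx.
have t2 : (t * (2 ^+ d * c) <= eta / 2)%R.
  have : (t <= eta / (2 * 2 ^+ d * c))%R by rewrite ge_min lexx orbT.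
  rewrite ler_pdivlMr; last first.
    by apply: mulr_gt0 => //; apply: mulr_gt0 => //; lra.
  move=> h; nra.
pose a' k := (a k - t *: (b k - a k))%R.
exists (\bigcup_k obox (a' k) (b k)); split.
- by apply: bigcup_open => k _; exact: open_obox.
- move=> x /Xc [k _ xk]; exists k => // i; have /andP[h1 h2] := xk i.
  rewrite /a' !mxE h2 andbT.
  have : (0 < t * (b k ord0 i - a k ord0 i))%R.
    by apply: mulr_gt0 => //; rewrite subr_gt0; apply: le_lt_trans h1 h2.
  lra.
- apply: le_trans (@mu_cover _ a' b _) _.
    move=> x [k _ xk]; exists k => // i; have /andP[h1 h2] := xk i.
    by rewrite (ltW h1) h2.
  rewrite (@eq_eseriesr _ _ (fun k => ((1 + t) ^+ d)%:E * (box_vol (a k) (b k))%:E)%E); last first.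
    by move=> k _; rewrite /a' vol_scale ?EFinM // ltW.
  rewrite nneseriesZl; last by move=> k _; rewrite lee_fin box_vol_ge0.
  rewrite -/S SE -EFinM muXE -EFinD lee_fin.
  have pw := pow_le d (ltW t0) t1.
  apply: (@le_trans _ _ ((1 + t * 2 ^+ d) * fine S)%R).
    by apply: ler_wpM2r.
  apply: (@le_trans _ _ ((1 + t * 2 ^+ d) * c)%R).
    by apply: ler_wpM2l => //; apply: addr_ge0 => //; apply: mulr_ge0 => //; exact: ltW.
  move: t2; rewrite /c; nra.
Qed.


Lemma coord_le_norm (x : V) i : (`|x ord0 i| <= `|x|)%R.
Proof.
have /mapP[j Hj ->] : (`|x ord0 i| \in [seq `|x k.1 k.2| | k : 'I_1 * 'I_d])%R.
  by apply/mapP; exists (ord0, i) => //=; rewrite mem_enum.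
by rewrite [leRHS]/Num.norm /= mx_normrE; apply/bigmax_geP; right => /=; exists j.
Qed.

Lemma mu_fin_lt (X : set V) : mu X \is a fin_num <-> (mu X < +oo)%E.
Proof. by rewrite ge0_fin_numE // mu_ge0. Qed.

Lemma approx (A K : set V) (eta : R) : M A -> closed K -> mu K \is a fin_num ->
  (0 < eta)%R ->
  exists F, [/\ closed F, F `<=` A & (mu ((A `&` K) `\` F) <= eta%:E)%E].
Proof.
move=> mA cK Kfin e0.
set A' := A `&` K.
have mA' : M A' by apply: measI => //; exact: meas_closed.
set X := K `\` A'.
have Xfin : mu X \is a fin_num.
  apply/mu_fin_lt; apply: le_lt_trans (le_mu (B := K) _) _; first by move=> x [].
  exact/mu_fin_lt.
have [U [oU XU muU]] := outer_reg e0 Xfin.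
exists (K `&` ~` U); split.
- by apply: closedI => //; exact: open_closedC.
- move=> x [Kx nUx]; apply: NNPP => nAx; apply: nUx; apply: XU; split => //.
  by move=> [Ax _]; exact: nAx.
- have car := mA' U.
  have h1 : (mu X <= mu (U `&` ~` A'))%E.
    by apply: le_mu => x [Kx nA']; split => //; apply: XU.
  have h2 : (mu ((A `&` K) `\` (K `&` ~` U)) <= mu (U `&` A'))%E.
    apply: le_mu => x [[Ax Kx] nF]; split; last by [].
    by apply: NNPP => nU; apply: nF.
  apply: le_trans h2 _.
  rewrite -(leeD2rE (mu (U `&` A')) eta%:E Xfin).
  apply: le_trans (leeD2l _ h1) _; rewrite -car addeC; exact: muU.
Qed.

Lemma delta_close (y : V) (W A F D : set V) (eta : R) :
  F `<=` A -> mu W \is a fin_num -> (mu D <= eta%:E)%E ->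
  (A `&` translate y A `&` W) `<=`
    (F `&` translate y F `&` W) `|` (D `|` translate y D) ->
  (0 <= delta y W A - delta y W F <= 2 * eta)%R.
Proof.
move=> FA Wfin De Hsub.
set SA := A `&` translate y A `&` W; set SF := F `&` translate y F `&` W.
have SFA : SF `<=` SA.
  move=> x [[Fx [z Fz yz]] Wx]; split => //; split; [exact: FA|].
  by exists z => //; exact: FA.
have SAfin : mu SA \is a fin_num.
  apply/mu_fin_lt; apply: le_lt_trans (le_mu (B := W) _) _; first by move=> x [].
  exact/mu_fin_lt.
have SFfin : mu SF \is a fin_num.
  apply/mu_fin_lt; apply: le_lt_trans (le_mu SFA) _; exact/mu_fin_lt.
have h1 : (mu SA <= mu SF + (eta%:E + eta%:E))%E.
  apply: le_trans (le_mu Hsub) _.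
  apply: le_trans (outer_measureU2 lebO _ _) _; rewrite lebOE.
  apply: leeD2l; apply: le_trans (outer_measureU2 lebO _ _) _; rewrite lebOE.
  by apply: leeD => //; apply: le_trans (mu_translate _ _) De.
have h2 := le_mu SFA.
have e0 : (0 <= eta)%R by rewrite -lee_fin; apply: le_trans (mu_ge0 D) De.
rewrite /delta -/SA -/SF.
move: h1 h2; rewrite -(fineK SAfin) -(fineK SFfin) -!EFinD !lee_fin.
move=> h1 h2; apply/andP; split; lra.
Qed.


Lemma win_bound (W : set V) : window W ->
  exists r : R, (0 < r)%R /\ (forall x, W x -> (`|x| <= r)%R).
Proof.
move=> [_ [[Mb [_ hM]] _]].
exists (`|Mb| + 1)%R; split; first by rewrite ltr_pwDr // normr_ge0.
move=> x Wx; apply: (hM (`|Mb| + 1)%R) => //.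
by have := ler_norm Mb; lra.
Qed.

Lemma main_approx q (a : 'I_q -> R) (y : 'I_q -> V) (W : 'I_q -> set V) (c : R) :
  (forall i, window (W i)) ->
  (forall A, closed A -> (0 <= c + \sum_(i < q) a i * delta (y i) (W i) A)%R) ->
  forall A, M A -> (0 <= c + \sum_(i < q) a i * delta (y i) (W i) A)%R.
Proof.
move=> Ww Hc A mA.
have hb i := win_bound (Ww i).
have [Mf hMf] := boolp.choice hb.
pose Bd := (\sum_(i < q) (Mf i + `|y i|) + 1)%R.
have sum0 : (0 <= \sum_(i < q) (Mf i + `|y i|))%R.
  apply: sumr_ge0 => i _; apply: addr_ge0; last exact: normr_ge0.
  exact: ltW (hMf i).1.
have Bd0 : (0 < Bd)%R by rewrite /Bd; lra.
have MfB i : (Mf i + `|y i| <= Bd)%R.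
  rewrite /Bd (bigD1 i) //=.
  have : (0 <= \sum_(j < q | j != i) (Mf j + `|y j|))%R.
    apply: sumr_ge0 => j _; apply: addr_ge0; last exact: normr_ge0.
    exact: ltW (hMf j).1.
  lra.
pose K := closed_ball (0%R : V) Bd.
have KE x : K x <-> (`|x| <= Bd)%R.
  by rewrite /K closed_ballE //= /closed_ball_ /= sub0r normrN.
have cK : closed K by exact: closed_ball_closed.
have Kfin : mu K \is a fin_num.
  apply/mu_fin_lt.
  apply: (@le_lt_trans _ _ (mu (box (const_mx (- Bd)%R) (const_mx (Bd + 1)%R)))).
    apply: le_mu => x /KE xK i; rewrite !mxE.
    have := coord_le_norm x i; rewrite ler_norml => /andP[h1 h2].
    apply/andP; split; lra.
  by apply: le_lt_trans (mu_box_le _ _) _; rewrite ltry.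
have WK i x : W i x -> K x.
  move=> Wx; apply/KE; have := (hMf i).2 x Wx; have := MfB i.
  have := normr_ge0 (y i); lra.
have WyK i z : W i (y i + z)%R -> K z.
  move=> Wx; apply/KE; have := (hMf i).2 _ Wx; have := MfB i.
  have : (`|z| <= `|y i + z| + `|y i|)%R.
    by have := ler_normD (z + y i)%R (- y i)%R; rewrite addrK normrN (addrC z).
  lra.
pose x := (c + \sum_(i < q) a i * delta (y i) (W i) A)%R.
suff H : forall e, (0 < e)%R -> (- e <= x)%R.
  rewrite -/x leNgt; apply/negP => x0.
  have := H (- x / 2)%R; lra.
move=> e e0.
pose SA := (\sum_(i < q) `|a i|)%R.
have SA0 : (0 <= SA)%R by apply: sumr_ge0 => i _; exact: normr_ge0.
pose eta := (e / (2 * (SA + 1)))%R.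
have eta0 : (0 < eta)%R by apply: divr_gt0 => //; lra.
have [F [cF FA De]] := approx mA cK Kfin eta0.
set D := (A `&` K) `\` F in De.
have cl i : (0 <= delta (y i) (W i) A - delta (y i) (W i) F <= 2 * eta)%R.
  apply: (delta_close (D := D)) => //.
    apply/mu_fin_lt; apply: le_lt_trans (le_mu (B := K) _) _; first exact: WK.
    exact/mu_fin_lt.
  move=> t [[At [z Az yz]] Wt].
  have [Ft|nFt] := pselect (F t); last first.
    by right; left; split => //; split => //; exact: WK Wt.
  have [Fz|nFz] := pselect (F z); last first.
    right; right; exists z => //; split => //; split => //.
    by apply: (WyK i); rewrite yz.
  by left; split => //; split => //; exists z.
have := Hc F cF.
have hdiff : (`|\sum_(i < q) a i * delta (y i) (W i) A -
              \sum_(i < q) a i * delta (y i) (W i) F| <= SA * (2 * eta))%R.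
  rewrite -sumrB; apply: le_trans (ler_norm_sum _ _ _) _.
  rewrite /SA mulr_suml; apply: ler_sum => i _.
  rewrite -mulrBr normrM; apply: ler_wpM2l; first exact: normr_ge0.
  have := cl i; rewrite ler_norml => /andP[h1 h2]; apply/andP; split; lra.
have hSe : (SA * (2 * eta) <= e)%R.
  have -> : (SA * (2 * eta) = e * (SA / (SA + 1)))%R.
    by rewrite /eta; field; apply/eqP; lra.
  rewrite ger_pMr // ler_pdivrMr; lra.
move: hdiff; rewrite ler_norml /x => /andP[h1 h2] h3; lra.
Qed.

End P.

Lemma mu_ge1_d0 (R : realType) (d : nat) (X : set 'rV[R]_d) :
  d = 0%N -> (1 <= leb_outer X)%E.
Proof.
move=> d0; apply: le_ereal_inf_tmp => _ [a [b [_ ->]]].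
have v1 k : box_vol (a k) (b k) = 1%R by rewrite /box_vol; subst d; rewrite big_ord0.
apply: le_trans (nneseries_lim_ge 1 _); last by move=> k _ _; rewrite v1 lee_fin.
by rewrite big_nat1 v1.
Qed.

Lemma no_window_d0 (R : realType) (d : nat) (W : set 'rV[R]_d) :
  d = 0%N -> ~ window W.
Proof.
move=> d0 [_ [_ h]]; have := mu_ge1_d0 (closure W `\` interior W) d0.
by rewrite h lee_fin ler10.
Qed.

Unset Implicit Arguments.

Theorem proposition4p11 (R : realType) (d : nat)
  (gamma : 'rV[R]_d -> set 'rV[R]_d -> R) :
  lc_admissible (@closed_set R d) gamma <->
  lc_admissible (@leb_measurable R d) gamma.
Proof.
split.
- move=> HF q a y W c q0 Ww Hyp; apply: HF => // A cA.
  have [d0|hd] := posnP d.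
    by exfalso; apply: (no_window_d0 d0 (Ww (Ordinal q0))).
  by apply: Hyp; exact: meas_closed.
- move=> HM q a y W c q0 Ww Hyp; apply: HM => // A mA.
  have [d0|hd] := posnP d.
    by exfalso; apply: (no_window_d0 d0 (Ww (Ordinal q0))).
  exact: (main_approx hd Ww Hyp mA).
Qed.
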